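(* Suppose the Lipschitz assumption holds. Then for every $t\in\mathbb N_T$ there exists a constant $K^5_t>0$ such that for all $m_t\in\mathcal M_n$ and $z_t\in\Delta(\mathcal X)$, $$|V_t(m_t)-\hat V_t(z_t)|\le K^5_t\|m_t-z_t\|_\infty+\mathcal O(1/\sqrt n).$$
   Context: Fix $n\in\mathbb N$ agents, $T\in\mathbb N$, finite sets $\mathcal X,\mathcal U,\mathcal W$; $\mathbb N_k=\{1,\dots,k\}$; $\mathcal I(\mathcal X)=[0,1]^{\mathcal X}$; $\Delta(\mathcal X)$ the probability vectors on $\mathcal X$; $\mathcal M_n=\{m\in\Delta(\mathcal X):m(x)\in\{0,\tfrac1n,\dots,1\}\}$. Agent $i\in\mathbb N_n$ has state $x^i_t\in\mathcal X$ and action $u^i_t\in\mathcal U$; mean-field $m_t(x)=\frac1n\sum_i\mathbb 1(x^i_t=x)$; dynamics $x^i_{t+1}=f_t(x^i_t,u^i_t,w^i_t,m_t)$ with $f_t:\mathcal X\times\mathcal U\times\mathcal W\times\mathcal I(\mathcal X)\to\mathcal X$; for each $t$ the noises $w^1_t,\dots,w^n_t$ are i.i.d. with law $\mathbb P(w_t=\cdot)$, independent of everything up to time $t$. $\mathbb P(y|x,u,z)=\sum_w\mathbb 1(f_t(x,u,w,z)=y)\mathbb P(w_t=w)$; costs $\ell_t:\mathcal X\times\mathcal U\times\mathcal I(\mathcal X)\to\mathbb R_{\ge0}$. Lipschitz assumption: constants $K^1_t,K^2_t>0$ with $|\mathbb P(y|x,u,z_1)-\mathbb P(y|x,u,z_2)|\le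 K^1_t\|z_1-z_2\|_\infty$, $|\ell_t(x,u,z_1)-\ell_t(x,u,z_2)|\le K^2_t\|z_1-z_2\|_\infty$ for all $x,y,u$, $z_1,z_2\in\mathcal I(\mathcal X)$. $\mathcal G$ is the set of maps $\gamma:\mathcal X\to\mathcal U$; $\hat f_t(z,\gamma)(y)=\sum_x z(x)\mathbb P(y|x,\gamma(x),z)$; $\hat c_t(z,\gamma)=\sum_x z(x)\ell_t(x,\gamma(x),z)$. Deterministic value functions $\hat V_t:\Delta(\mathcal X)\to\mathbb R$: $\hat V_{T+1}\equiv0$, $\hat V_t(z)=\min_{\gamma\in\mathcal G}\big(\hat c_t(z,\gamma)+\hat V_{t+1}(\hat f_t(z,\gamma))\big)$. Mean-field sharing value functions $V_t:\mathcal M_n\to\mathbb R$: $V_{T+1}\equiv0$, $V_t(m)=\min_{\gamma\in\mathcal G}\big(\hat c_t(m,\gamma)+\mathbb E[V_{t+1}(m_{t+1})\mid m_t=m,\gamma_t=\gamma]\big)$, where the conditional expectation is with respect to the law of the empirical distribution $m_{t+1}$ at time $t+1$ when the empirical distribution at time $t$ is $m$ and every agent uses $u^i_t=\gamma(x^i_t)$. Model data do not depend on $n$; $\mathcal O(1/\sqrt n)$ denotes a quantity bounded by $C/\sqrt n$ with $C$ independent of $n$, $m_t$, $z_t$. *)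

(* Defs.v *)
From mathcomp Require Import all_boot all_order all_algebra.
From mathcomp Require Import reals.
Set Implicit Arguments. Unset Strict Implicit. Unset Printing Implicit Defensive.
Import Order.TTheory GRing.Theory Num.Theory.
Local Open Scope ring_scope.

Section MF.
Variables (R : realType) (X U W : finType).

Definition supnorm (z : {ffun X -> R}) : R := \big[Num.max/0]_(x : X) `|z x|.

Definition inI (z : {ffun X -> R}) : Prop := forall x, 0 <= z x <= 1.
Definition inDelta (z : {ffun X -> R}) : Prop :=
  (forall x, 0 <= z x) /\ \sum_(x : X) z x = 1.
Definition inMn (n : nat) (m : {ffun X -> R}) : Prop :=
  inDelta m /\ forall x, exists k : nat, (k <= n)%N /\ m x = k%:R / n%:R.

(* minimum over the finite set G of maps X -> U (0 if G is empty) *)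
Definition minG (F : {ffun X -> U} -> R) : R :=
  match enum {ffun X -> U} with
  | [::] => 0
  | g :: s => foldr (fun g' acc => Num.min (F g') acc) (F g) s
  end.

Variables (f : nat -> X -> U -> W -> {ffun X -> R} -> X)
          (pw : nat -> W -> R)
          (l : nat -> X -> U -> {ffun X -> R} -> R).

Definition Ptr (t : nat) (x : X) (u : U) (z : {ffun X -> R}) (y : X) : R :=
  \sum_(w : W) (f t x u w z == y)%:R * pw t w.

Definition fhat (t : nat) (z : {ffun X -> R}) (g : {ffun X -> U}) : {ffun X -> R} :=
  [ffun y => \sum_(x : X) z x * Ptr t x (g x) z y].
Definition chat (t : nat) (z : {ffun X -> R}) (g : {ffun X -> U}) : R :=
  \sum_(x : X) z x * l t x (g x) z.

(* Vhat_rec s t : value function at time t with s = T+1-t stages remaining *)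
Fixpoint Vhat_rec (s t : nat) (z : {ffun X -> R}) : R :=
  match s with
  | O => 0
  | s'.+1 => minG (fun g => chat t z g + Vhat_rec s' t.+1 (fhat t z g))
  end.
Definition Vhat (T t : nat) (z : {ffun X -> R}) : R := Vhat_rec (T.+1 - t) t z.

Definition emp (n : nat) (x : {ffun 'I_n -> X}) : {ffun X -> R} :=
  [ffun y => #|[set i | x i == y]|%:R / n%:R].

(* Mean-field sharing value function: V_t(m) = min_g (chat t m g +
   E[V_{t+1}(m_{t+1}) | m_t = m, g]); the conditional expectation is computed
   from any configuration x with empirical distribution m (a canonical one is
   picked), each agent i moving to f t (x i) (g (x i)) (w i) m with
   i.i.d. noises w i of law pw t. *)
Fixpoint V_rec (n : nat) (s t : nat) (m : {ffun X -> R}) : R :=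
  match s with
  | O => 0
  | s'.+1 =>
    match [pick x : {ffun 'I_n -> X} | emp x == m] with
    | None => 0
    | Some x =>
      minG (fun g => chat t m g +
        \sum_(w : {ffun 'I_n -> W}) (\prod_(i < n) pw t (w i)) *
           V_rec n s' t.+1 (emp [ffun i => f t (x i) (g (x i)) (w i) m]))
    end
  end.
Definition V (n T t : nat) (m : {ffun X -> R}) : R := V_rec n (T.+1 - t) t m.

End MF.

(* Main.v *)
Require Import Defs.
From mathcomp Require Import all_boot all_order all_algebra.
From mathcomp Require Import reals.
From mathcomp Require Import ring lra zify.
Import Order.TTheory GRing.Theory Num.Theory.
Local Open Scope ring_scope.

Section Gen.
Variable R : realType.

Lemma supnorm_ge0 (X : finType) (z : {ffun X -> R}) : 0 <= supnorm z.
Proof. rewrite /supnorm; elim/big_ind: _ => //= a b ha hb; rewrite le_max ha //. Qed.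

Lemma supnorm_ge (X : finType) (z : {ffun X -> R}) x : `|z x| <= supnorm z.
Proof. exact: (le_bigmax (0:R) (fun x => `|z x|) x). Qed.

Lemma supnorm_le (X : finType) (z : {ffun X -> R}) c :
  0 <= c -> (forall x, `|z x| <= c) -> supnorm z <= c.
Proof. move=> c0 h; apply/bigmax_leP; split => // x _; exact: h. Qed.

Lemma supnorm_sum (X : finType) (z : {ffun X -> R}) : supnorm z <= \sum_x `|z x|.
Proof.
apply: supnorm_le; first by apply: sumr_ge0.
move=> x; rewrite (bigD1 x) //= lerDl; apply: sumr_ge0 => ? _; done.
Qed.

Lemma sum_le_supnorm (X : finType) (z : {ffun X -> R}) :
  \sum_x `|z x| <= #|X|%:R * supnorm z.
Proof.
have -> : #|X|%:R * supnorm z = \sum_(x : X) supnorm z by rewrite sumr_const mulr_natl.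
by apply: ler_sum => x _; apply: supnorm_ge.
Qed.

Lemma min_lip (a b c d e : R) : `|a - c| <= e -> `|b - d| <= e ->
  `|Num.min a b - Num.min c d| <= e.
Proof.
rewrite !ler_norml => /andP[h1 h2] /andP[h3 h4].
rewrite !minEle; case: (leP a b) => h5; case: (leP c d) => h6; apply/andP; split; lra.
Qed.

Lemma minG_lip (X U : finType) (F G : {ffun X -> U} -> R) e :
  0 <= e -> (forall g, `|F g - G g| <= e) -> `|minG F - minG G| <= e.
Proof.
move=> e0 h; rewrite /minG; case: (enum _) => [|g s]; first by rewrite subr0 normr0.
elim: s => [|g' s IH] //=; exact: min_lip.
Qed.

End Gen.


Section Exp.
Variables (R : realType) (W : finType) (n : nat) (p : W -> R).
Hypothesis p0 : forall w, 0 <= p w.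
Hypothesis p1 : \sum_w p w = 1.

Definition Ex (F : {ffun 'I_n -> W} -> R) : R :=
  \sum_(w : {ffun 'I_n -> W}) (\prod_(i < n) p (w i)) * F w.

Lemma Ex_factor (phi : 'I_n -> W -> R) :
  Ex (fun w => \prod_i phi i (w i)) = \prod_i \sum_v p v * phi i v.
Proof.
rewrite /Ex bigA_distr_bigA /=; apply: eq_bigr => w _; by rewrite big_split.
Qed.

Lemma Ex_ext F G : (forall w, F w = G w) -> Ex F = Ex G.
Proof. by move=> h; apply: eq_bigr => w _; rewrite h. Qed.

Lemma Ex1 : Ex (fun _ => 1) = 1.
Proof.
rewrite (@Ex_ext _ (fun w => \prod_(i < n) (1:R))); last by move=> w; rewrite big1.
have := Ex_factor (fun _ _ => 1); rewrite /= => ->; apply: big1 => i _; under eq_bigr do rewrite mulr1; exact: p1.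
Qed.

Lemma ExD F G : Ex (fun w => F w + G w) = Ex F + Ex G.
Proof. rewrite /Ex -big_split /=; apply: eq_bigr => w _; by rewrite mulrDr. Qed.

Lemma ExZ c F : Ex (fun w => c * F w) = c * Ex F.
Proof. rewrite /Ex mulr_sumr; apply: eq_bigr => w _; by rewrite mulrCA. Qed.

Lemma ExC c : Ex (fun _ => c) = c.
Proof. rewrite (@Ex_ext _ (fun w => c * 1)); last by move=> w; rewrite mulr1.
by rewrite (ExZ c (fun _ => 1)) Ex1 mulr1. Qed.

Lemma ExB F G : Ex (fun w => F w - G w) = Ex F - Ex G.
Proof.
rewrite /Ex -sumrB; apply: eq_bigr => w _; by rewrite mulrBr.
Qed.

Lemma Ex_sum (I : finType) (F : I -> {ffun 'I_n -> W} -> R) :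
  Ex (fun w => \sum_i F i w) = \sum_i Ex (F i).
Proof.
rewrite /Ex exchange_big /=; apply: eq_bigr => w _; by rewrite mulr_sumr.
Qed.

Lemma prod_p_ge0 (w : {ffun 'I_n -> W}) : 0 <= \prod_i p (w i).
Proof. by apply: prodr_ge0 => i _. Qed.

Lemma Ex_le F G : (forall w, F w <= G w) -> Ex F <= Ex G.
Proof.
move=> h; apply: ler_sum => w _; apply: ler_wpM2l; [exact: prod_p_ge0|exact: h].
Qed.

Lemma Ex_norm F : `|Ex F| <= Ex (fun w => `|F w|).
Proof.
rewrite /Ex; apply: le_trans (ler_norm_sum _ _ _) _; apply: ler_sum => w _.
by rewrite normrM ger0_norm // prod_p_ge0.
Qed.


Lemma Ex_indep (D : 'I_n -> W -> R) i j : i != j ->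
  \sum_v p v * D i v = 0 ->
  Ex (fun w => D i (w i) * D j (w j)) = 0.
Proof.
move=> ij ED.
pose phi a v := (if a == i then D i v else 1) * (if a == j then D j v else 1).
rewrite (@Ex_ext _ (fun w => \prod_a phi a (w a))); last first.
  move=> w /=; rewrite /phi big_split /= -!big_mkcond /= !big_pred1_eq //.
rewrite Ex_factor (bigD1 i) //= /phi eqxx (negbTE ij).
under eq_bigr do rewrite mulr1.
by rewrite ED mul0r.
Qed.

Lemma conc (Z : 'I_n -> W -> R) : (0 < n)%N -> (forall i v, 0 <= Z i v <= 1) ->
  Ex (fun w => `|(\sum_i Z i (w i)) / n%:R - (\sum_i \sum_v Z i v * p v) / n%:R|)
    <= 1 / Num.sqrt n%:R.
Proof.
move=> n0 Z01.
pose c i := \sum_v Z i v * p v.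
pose D i v := Z i v - c i.
have c01 : forall i, 0 <= c i <= 1.
  move=> i; apply/andP; split.
    apply: sumr_ge0 => v _; apply: mulr_ge0; [by case/andP: (Z01 i v)|exact: p0].
  rewrite -p1; apply: ler_sum => v _; rewrite ler_piMl //.
  by case/andP: (Z01 i v).
have ED : forall i, \sum_v p v * D i v = 0.
  move=> i; rewrite /D; under eq_bigr do rewrite mulrBr.
  rewrite sumrB -mulr_suml p1 mul1r /c; apply/eqP; rewrite subr_eq0; apply/eqP.
  apply: eq_bigr => v _; exact: mulrC.
have Dn : forall i v, -1 <= D i v <= 1.
  move=> i v; rewrite /D; have := c01 i; have := Z01 i v => /andP[h1 h2] /andP[h3 h4].
  apply/andP; split; lra.
pose S w := \sum_i D i (w i : W).
have nR : (0 : R) < n%:R by rewrite ltr0n.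
set sn := Num.sqrt n%:R.
have sn0 : 0 < sn by rewrite sqrtr_gt0.
have snn : sn * sn = n%:R by rewrite -expr2 sqr_sqrtr // ltW.
have ptw : forall w : {ffun 'I_n -> W},
   `|(\sum_i Z i (w i)) / n%:R - (\sum_i c i) / n%:R| = `|S w| / n%:R.
  move=> w; rewrite -mulrBl normrM [`|n%:R^-1|]ger0_norm ?invr_ge0 ?ler0n //.
  by rewrite /S /D sumrB.
rewrite (@Ex_ext _ (fun w => n%:R^-1 * `|S w|)); last by move=> w; rewrite ptw mulrC.
rewrite ExZ.
have ES2 : Ex (fun w => S w ^+ 2) <= n%:R.
  rewrite (@Ex_ext _ (fun w => \sum_i \sum_j D i (w i) * D j (w j))); last first.
    move=> w; rewrite expr2 /S mulr_suml; apply: eq_bigr => i _; by rewrite mulr_sumr.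
  rewrite Ex_sum.
  have -> : (n%:R : R) = \sum_(i < n) (1:R) by rewrite sumr_const card_ord.
  apply: ler_sum => i _.
  rewrite (Ex_sum _ (fun j w => D i (w i) * D j (w j))).
  rewrite (bigD1 i) //= big1 ?addr0; last by move=> j ji; apply: Ex_indep; rewrite // eq_sym.
  rewrite -Ex1; apply: Ex_le => w; have := Dn i (w i) => /andP[h1 h2]; nra.
have key : 2 * sn * Ex (fun w => `|S w|) <= Ex (fun w => S w ^+ 2) + n%:R.
  rewrite -ExZ -[X in _ + X](ExC n%:R) -ExD; apply: Ex_le => w.
  rewrite -snn -real_normK ?num_real //; have := sqr_ge0 (`|S w| - sn); nra.
have : Ex (fun w => `|S w|) <= sn by nra.
move=> h; apply: le_trans (ler_wpM2l _ h) _; first by rewrite invr_ge0 ler0n.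
rewrite -snn le_eqVlt; apply/orP; left; apply/eqP; field.
by rewrite gt_eqF.
Qed.

End Exp.
Arguments Ex {R W n} p F.
Arguments Ex_ext {R W n p F G}.
Arguments Ex1 {R W n p}.
Arguments ExD {R W n p} F G.
Arguments ExZ {R W n p} c F.
Arguments ExC {R W n p} p1 c.
Arguments ExB {R W n p} F G.
Arguments Ex_sum {R W n p I} F.
Arguments Ex_le {R W n p} p0 {F G}.
Arguments Ex_norm {R W n p} p0 F.
Arguments conc {R W n p} p0 p1 Z.


Section Comb.
Variables (R : realType) (X : finType).

Lemma sum_cond_const n (x : {ffun 'I_n -> X}) y (c : R) :
  \sum_(i | x i == y) c = #|[set i | x i == y]|%:R * c.
Proof.
rewrite (eq_bigl (fun i => i \in [set i | x i == y])); last by move=> i; rewrite inE.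
by rewrite sumr_const mulr_natl.
Qed.

Lemma sum_ind n (x : {ffun 'I_n -> X}) y :
  \sum_i ((x i == y)%:R : R) = #|[set i | x i == y]|%:R.
Proof.
rewrite (eq_bigr (fun i => if x i == y then 1 else 0)); last by move=> i _; case: (x i == y).
by rewrite -big_mkcond /= sum_cond_const mulr1.
Qed.

Lemma sum_fiber n (x : {ffun 'I_n -> X}) (F : X -> R) :
  \sum_i F (x i) = \sum_y #|[set i | x i == y]|%:R * F y.
Proof.
rewrite (partition_big x predT) //=; apply: eq_bigr => y _.
rewrite -sum_cond_const; apply: eq_bigr => i /eqP -> //.
Qed.

Lemma sum_card n (x : {ffun 'I_n -> X}) :
  \sum_y (#|[set i | x i == y]|%:R : R) = n%:R.
Proof.
have := @sum_fiber n x (fun _ => 1); rewrite sumr_const card_ord => ->.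
by apply: eq_bigr => y _; rewrite mulr1.
Qed.

Lemma emp_inMn n (x : {ffun 'I_n -> X}) : (0 < n)%N -> inMn n (emp R x).
Proof.
move=> n0; have nR : (n%:R : R) != 0 by rewrite pnatr_eq0 -lt0n.
split; first split.
- by move=> y; rewrite ffunE divr_ge0 ?ler0n.
- under eq_bigr do rewrite ffunE.
  by rewrite -mulr_suml sum_card mulfV.
- move=> y; exists #|[set i | x i == y]|; split; last by rewrite ffunE.
  by have := max_card (mem [set i | x i == y]); rewrite card_ord.
Qed.

Lemma Delta_inI (z : {ffun X -> R}) : inDelta z -> inI z.
Proof.
case=> z0 z1 x; rewrite z0 /= -z1 (bigD1 x) //= lerDl; apply: sumr_ge0 => *; exact: z0.
Qed.

Lemma supnorm_Delta (z : {ffun X -> R}) : inDelta z -> supnorm z <= 1.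
Proof.
move=> /Delta_inI h; apply: supnorm_le => // x; have /andP[a b] := h x.
by rewrite ger0_norm.
Qed.

Lemma emp_exists n (m : {ffun X -> R}) : (0 < n)%N -> inMn n m ->
  exists x : {ffun 'I_n -> X}, emp R x = m.
Proof.
move=> n0 [[m0 m1] hk].
have nR : (n%:R : R) != 0 by rewrite pnatr_eq0 -lt0n.
have [k hk'] := fin_all_exists hk.
have km : forall y, m y = (k y)%:R / n%:R by move=> y; case: (hk' y).
have sk : \sum_y k y = n.
  have : \sum_y (k y)%:R / n%:R = 1 :> R by rewrite -[RHS]m1; apply: eq_bigr => y _; rewrite km.
  rewrite -mulr_suml => /(congr1 (fun a => a * n%:R)); rewrite divfK // mul1r -natr_sum.
  by move/eqP; rewrite eqr_nat => /eqP.
case: (pickP (fun _ : X => true)) => [x0 _|]; last first.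
  move=> h; move: m1; rewrite big_pred0 // => /eqP; rewrite eq_sym oner_eq0 //.
pose s := flatten [seq nseq (k y) y | y <- enum X].
have ss : size s = n.
  rewrite size_flatten /shape -map_comp.
  rewrite (eq_map (g := k)); last by move=> y /=; rewrite size_nseq.
  by rewrite -sk sumnE big_map big_enum.
have cs : forall y, count_mem y s = k y.
  move=> y; rewrite count_flatten -map_comp.
  rewrite (eq_map (g := fun y' => ((y' == y) * k y')%N)); last first.
    by move=> y' /=; rewrite count_nseq /= mulnC.
  rewrite sumnE big_map big_enum (bigD1 y) //= eqxx mul1n big1 ?addn0 //.
  by move=> y' /negbTE ->.
exists [ffun i : 'I_n => nth x0 s i].
apply/ffunP => y; rewrite !ffunE km; congr (_ / _); congr (_%:R).
rewrite -cs -sum1_count (big_nth x0) ss big_mkord.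
rewrite -sum1_card; apply: eq_bigl => i; by rewrite inE ffunE.
Qed.

End Comb.
Arguments sum_fiber {R X n} x F.
Arguments sum_ind {R X n} x y.
Arguments Delta_inI {R X z}.
Arguments supnorm_Delta {R X z}.
Arguments emp_inMn {R X n} x.
Arguments emp_exists {R X n m}.


Lemma lip_sum (R : realType) (X : finType) (z z' : {ffun X -> R}) (A A' : X -> R) a b :
  inDelta z' -> 0 <= a -> (forall x, `|A x| <= a) -> (forall x, `|A x - A' x| <= b) ->
  `|\sum_x z x * A x - \sum_x z' x * A' x| <= #|X|%:R * a * supnorm (z - z') + b.
Proof.
move=> [z0 z1] a0 hA hB.
rewrite -sumrB.
rewrite (eq_bigr (fun x => (z x - z' x) * A x + z' x * (A x - A' x))); last by move=> x _; ring.
apply: le_trans (ler_norm_sum _ _ _) _.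
apply: (@le_trans _ _ (\sum_x (`|z x - z' x| * a + z' x * b))).
  apply: ler_sum => x _; apply: le_trans (ler_normD _ _) _; apply: lerD.
    by rewrite normrM ler_wpM2l.
  by rewrite normrM ger0_norm // ler_wpM2l.
rewrite big_split /= -mulr_suml -mulr_suml z1 mul1r lerD2r mulrAC ler_wpM2r //.
apply: le_trans (@sum_le_supnorm _ _ (z - z')); under [X in _ <= X]eq_bigr do rewrite !ffunE; exact: lexx.
Qed.

Section Model.
Variables (R : realType) (X U W : finType)
  (f : nat -> X -> U -> W -> {ffun X -> R} -> X)
  (pw : nat -> W -> R)
  (l : nat -> X -> U -> {ffun X -> R} -> R)
  (K1 K2 : nat -> R) (T : nat).
Hypothesis Hp : forall t, (1 <= t <= T)%N -> (forall w, 0 <= pw t w) /\ \sum_(w : W) pw t w = 1.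
Hypothesis HL : forall t, (1 <= t <= T)%N ->
     0 < K1 t /\ 0 < K2 t /\
     forall (x y : X) (u : U) (z1 z2 : {ffun X -> R}), inI z1 -> inI z2 ->
       `|Ptr f pw t x u z1 y - Ptr f pw t x u z2 y| <= K1 t * supnorm (z1 - z2) /\
       `|l t x u z1 - l t x u z2| <= K2 t * supnorm (z1 - z2).

Lemma sum_ind_const (y0 : X) (c : R) : \sum_y ((y0 == y)%:R * c) = c.
Proof.
rewrite (bigD1 y0) //= eqxx mul1r big1 ?addr0 // => y; rewrite eq_sym => /negbTE ->.
by rewrite mul0r.
Qed.

Lemma Ptr_sum t x u z : (1 <= t <= T)%N -> \sum_y Ptr f pw t x u z y = 1.
Proof.
move=> ht; have [_ p1] := Hp _ ht; rewrite /Ptr exchange_big /= -[RHS]p1.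
apply: eq_bigr => w _; exact: sum_ind_const.
Qed.

Lemma Ptr_01 t x u z y : (1 <= t <= T)%N -> 0 <= Ptr f pw t x u z y <= 1.
Proof.
move=> ht; have [p0 _] := Hp _ ht; apply/andP; split.
  by apply: sumr_ge0 => w _; apply: mulr_ge0; rewrite ?ler0n.
rewrite -(Ptr_sum t x u z ht) (bigD1 y) //= lerDl; apply: sumr_ge0 => y' _.
by apply: sumr_ge0 => w _; apply: mulr_ge0; rewrite ?ler0n.
Qed.

Lemma fhat_Delta t z g : (1 <= t <= T)%N -> inDelta z -> inDelta (fhat f pw t z g).
Proof.
move=> ht [z0 z1]; split.
  move=> y; rewrite ffunE; apply: sumr_ge0 => x _; apply: mulr_ge0 => //.
  by case/andP: (Ptr_01 t x (g x) z y ht).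
under eq_bigr do rewrite ffunE.
rewrite exchange_big /= -[RHS]z1; apply: eq_bigr => x _.
by rewrite -mulr_sumr Ptr_sum // mulr1.
Qed.

Lemma lip_fhat t : (1 <= t <= T)%N -> exists b, 0 <= b /\ forall z z' g,
  inDelta z -> inDelta z' ->
  supnorm (fhat f pw t z g - fhat f pw t z' g) <= b * supnorm (z - z').
Proof.
move=> ht; have [k1 [_ hL]] := HL _ ht.
exists (#|X|%:R + K1 t); split; first by apply: addr_ge0; rewrite ?ler0n ?ltW.
move=> z z' g hz hz'; apply: supnorm_le.
  by apply: mulr_ge0; [apply: addr_ge0; rewrite ?ler0n ?ltW|exact: supnorm_ge0].
move=> y; rewrite !ffunE.
apply: le_trans (@lip_sum _ _ _ _ _ _ 1 (K1 t * supnorm (z - z')) hz' _ _ _) _ => //.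
- move=> x; have /andP[a1 a2] := Ptr_01 t x (g x) z y ht; by rewrite ger0_norm.
- by move=> x; apply: (proj1 (hL _ _ _ _ _ (Delta_inI hz) (Delta_inI hz'))).
- by rewrite mulr1 mulrDl.
Qed.

Lemma l_bound t : (1 <= t <= T)%N -> exists B, 0 <= B /\
  forall x u z, inDelta z -> `|l t x u z| <= B.
Proof.
move=> ht; have [_ [k2 hL]] := HL _ ht.
pose z0 : {ffun X -> R} := [ffun _ => 0].
have hz0 : inI z0 by move=> x; rewrite ffunE lexx ler01.
exists (\sum_x \sum_u `|l t x u z0| + K2 t); split.
  by apply: addr_ge0; [do 2 (apply: sumr_ge0 => ? _) | rewrite ltW].
move=> x u z hz.
have h1 : `|l t x u z0| <= \sum_x \sum_u `|l t x u z0|.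
  rewrite (bigD1 x) //= (bigD1 u) //= -addrA lerDl; apply: addr_ge0.
    by apply: sumr_ge0.
  by do 2 (apply: sumr_ge0 => ? _).
have h2 : `|l t x u z - l t x u z0| <= K2 t.
  apply: le_trans (proj2 (hL x x u z z0 (Delta_inI hz) hz0)) _.
  rewrite -[X in _ <= X]mulr1; apply: ler_wpM2l; first exact: ltW.
  apply: supnorm_le => // y; rewrite !ffunE subr0.
  by have /andP[a b] := Delta_inI hz y; rewrite ger0_norm.
have := ler_normD (l t x u z - l t x u z0) (l t x u z0); rewrite subrK.
move=> h3; apply: le_trans h3 _; rewrite addrC; exact: lerD.
Qed.

Lemma lip_chat t : (1 <= t <= T)%N -> exists a, 0 <= a /\ forall z z' g,
  inDelta z -> inDelta z' ->
  `|chat l t z g - chat l t z' g| <= a * supnorm (z - z').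
Proof.
move=> ht; have [k1 [k2 hL]] := HL _ ht; have [B [B0 hB]] := l_bound _ ht.
exists (#|X|%:R * B + K2 t); split; first by apply: addr_ge0; [apply: mulr_ge0; rewrite ?ler0n | exact: ltW].
move=> z z' g hz hz'; rewrite /chat.
apply: le_trans (@lip_sum _ _ _ _ _ _ B (K2 t * supnorm (z - z')) hz' _ _ _) _ => //.
- by move=> x; apply: hB.
- by move=> x; apply: (proj2 (hL _ x _ _ _ (Delta_inI hz) (Delta_inI hz'))).
- by rewrite mulrDl.
Qed.


Lemma Vhat_lip s : forall t, (1 <= t)%N -> (t + s = T.+1)%N -> exists L, 0 <= L /\
  forall z z', inDelta z -> inDelta z' ->
  `|Vhat_rec f pw l s t z - Vhat_rec f pw l s t z'| <= L * supnorm (z - z').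
Proof.
elim: s => [|s IH] t t1 ts.
  by exists 0; split => // z z' _ _ /=; rewrite subrr normr0 mul0r.
have ht : (1 <= t <= T)%N by apply/andP; split; lia.
have [L [L0 hL']] := IH t.+1 isT (etrans (addSnnS t s) ts).
have [a [a0 ha]] := lip_chat _ ht; have [b [b0 hb]] := lip_fhat _ ht.
exists (a + L * b); split; first by apply: addr_ge0 => //; apply: mulr_ge0.
move=> z z' hz hz' /=; apply: minG_lip.
  by apply: mulr_ge0; [apply: addr_ge0 => //; apply: mulr_ge0|apply: supnorm_ge0].
move=> g.
have -> : chat l t z g + Vhat_rec f pw l s t.+1 (fhat f pw t z g) -
   (chat l t z' g + Vhat_rec f pw l s t.+1 (fhat f pw t z' g)) =
   (chat l t z g - chat l t z' g) + (Vhat_rec f pw l s t.+1 (fhat f pw t z g) -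
    Vhat_rec f pw l s t.+1 (fhat f pw t z' g)) by ring.
apply: le_trans (ler_normD _ _) _; rewrite mulrDl; apply: lerD; first exact: ha.
apply: le_trans (hL' _ _ (fhat_Delta _ _ _ ht hz) (fhat_Delta _ _ _ ht hz')) _.
rewrite -mulrA; apply: ler_wpM2l => //; exact: hb.
Qed.

Lemma V_close s : forall t, (1 <= t)%N -> (t + s = T.+1)%N -> exists C, 0 <= C /\
  forall n, (0 < n)%N -> forall m, inMn n m ->
  `|V_rec f pw l n s t m - Vhat_rec f pw l s t m| <= C / Num.sqrt n%:R.
Proof.
elim: s => [|s IH] t t1 ts.
  by exists 0; split => // n n0 m hm /=; rewrite subrr normr0 mul0r.
have ht : (1 <= t <= T)%N by apply/andP; split; lia.
have ts' := etrans (addSnnS t s) ts.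
have [C' [C0 hC]] := IH t.+1 isT ts'.
have [L [L0 hL]] := Vhat_lip s t.+1 isT ts'.
have [p0 p1] := Hp _ ht.
exists (C' + L * #|X|%:R); split; first by apply: addr_ge0 => //; apply: mulr_ge0; rewrite ?ler0n.
move=> n n0 m hm.
have snp : 0 < Num.sqrt (n%:R : R) by rewrite sqrtr_gt0 ltr0n.
rewrite /=; case: pickP => [x /eqP hx | hnone]; last first.
  by have [x hx] := emp_exists n0 hm; move: (hnone x); rewrite hx eqxx.
apply: minG_lip.
  by apply: divr_ge0; [apply: addr_ge0 => //; apply: mulr_ge0; rewrite ?ler0n | exact: ltW].
move=> g; rewrite opprD addrACA subrr add0r.
pose y := fun w : {ffun 'I_n -> W} => [ffun i => f t (x i) (g (x i)) (w i) m].
pose c := Vhat_rec f pw l s t.+1 (fhat f pw t m g).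
change (`|Ex (pw t) (fun w => V_rec f pw l n s t.+1 (emp R (y w))) - c| <= (C' + L * #|X|%:R) / Num.sqrt n%:R).
rewrite -[X in _ - X](@ExC _ _ n _ p1 c) -ExB.
apply: le_trans (Ex_norm p0 _) _.
apply: le_trans (@Ex_le _ _ _ _ p0 _ (fun w => `|V_rec f pw l n s t.+1 (emp R (y w)) - Vhat_rec f pw l s t.+1 (emp R (y w))| + L * supnorm (emp R (y w) - fhat f pw t m g)) _) _.
  move=> w; apply: le_trans (ler_distD (Vhat_rec f pw l s t.+1 (emp R (y w))) _ _) _.
  apply: lerD => //; apply: (hL _ (fhat f pw t m g)); first by case: (@emp_inMn R _ _ (y w) n0).
  exact: fhat_Delta (proj1 hm).
rewrite ExD ExZ.
have h1 : Ex (pw t) (fun w => `|V_rec f pw l n s t.+1 (emp R (y w)) - Vhat_rec f pw l s t.+1 (emp R (y w))|) <= C' / Num.sqrt n%:R.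
  rewrite -[X in _ <= X](@ExC _ _ n _ p1); apply: Ex_le => // w; apply: hC => //; exact: emp_inMn.
have h2 : Ex (pw t) (fun w => supnorm (emp R (y w) - fhat f pw t m g)) <= #|X|%:R * (1 / Num.sqrt n%:R).
  apply: le_trans (@Ex_le _ _ _ _ p0 _ (fun w => \sum_y0 `|emp R (y w) y0 - fhat f pw t m g y0|) _) _.
    move=> w; apply: le_trans (supnorm_sum _ _ _) _.
    under eq_bigr do rewrite !ffunE; under [X in _ <= X]eq_bigr do rewrite !ffunE; exact: lexx.
  have -> : #|X|%:R * (1 / Num.sqrt n%:R) = \sum_(y0 : X) (1 / Num.sqrt (n%:R : R)).
    by rewrite sumr_const mulr_natl.
  rewrite Ex_sum; apply: ler_sum => y0 _.
  have hf : fhat f pw t m g y0 = (\sum_i Ptr f pw t (x i) (g (x i)) m y0) / n%:R.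
    have hm' : forall x', m x' = #|[set i | x i == x']|%:R / n%:R by move=> x'; rewrite -hx ffunE.
    rewrite ffunE (sum_fiber x (fun x' => Ptr f pw t x' (g x') m y0)) mulr_suml.
    by apply: eq_bigr => x' _; rewrite hm' mulrAC.
  have Z01 : forall i v, 0 <= ((f t (x i) (g (x i)) v m == y0)%:R : R) <= 1.
    by move=> i v; case: (_ == _); rewrite ?ler01 ?lexx.
  apply: le_trans (conc p0 p1 (fun i v => ((f t (x i) (g (x i)) v m == y0)%:R)) n0 Z01).
  rewrite le_eqVlt; apply/orP; left; apply/eqP; apply: Ex_ext => w.
  rewrite hf ffunE -sum_ind; congr (`| _ / _ - _ |).
  by apply: eq_bigr => i _; rewrite ffunE.
apply: le_trans (lerD h1 (ler_wpM2l L0 h2)) _.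
rewrite le_eqVlt; apply/orP; left; apply/eqP; field.
exact: lt0r_neq0.
Qed.

Lemma final t : (1 <= t <= T)%N -> exists K5 : R, 0 < K5 /\ exists C : R,
    forall (n : nat), (0 < n)%N ->
    forall (m z : {ffun X -> R}), inMn n m -> inDelta z ->
      `|V f pw l n T t m - Vhat f pw l T t z|
        <= K5 * supnorm (m - z) + C / Num.sqrt (n%:R).
Proof.
move=> /andP[t1 tT].
have ts : (t + (T.+1 - t) = T.+1)%N by lia.
have [L [L0 hL]] := Vhat_lip _ t t1 ts.
have [C [C0 hC]] := V_close _ t t1 ts.
exists (L + 1); split; first by lra.
exists C => n n0 m z hm hz; rewrite /V /Vhat.
apply: le_trans (ler_distD (Vhat_rec f pw l (T.+1 - t) t m) _ _) _.
rewrite addrC; apply: lerD; last exact: hC.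
apply: le_trans (hL _ _ (proj1 hm) hz) _; apply: ler_wpM2r; [exact: supnorm_ge0 | lra].
Qed.

End Model.


Theorem lemma6 (R : realType) (T : nat) (X U W : finType)
  (f : nat -> X -> U -> W -> {ffun X -> R} -> X)
  (pw : nat -> W -> R)
  (l : nat -> X -> U -> {ffun X -> R} -> R)
  (K1 K2 : nat -> R) :
  (forall t, (1 <= t <= T)%N -> (forall w, 0 <= pw t w) /\ \sum_(w : W) pw t w = 1) ->
  (forall t x u z, (1 <= t <= T)%N -> 0 <= l t x u z) ->
  (forall t, (1 <= t <= T)%N ->
     0 < K1 t /\ 0 < K2 t /\
     forall (x y : X) (u : U) (z1 z2 : {ffun X -> R}), inI z1 -> inI z2 ->
       `|Ptr f pw t x u z1 y - Ptr f pw t x u z2 y| <= K1 t * supnorm (z1 - z2) /\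
       `|l t x u z1 - l t x u z2| <= K2 t * supnorm (z1 - z2)) ->
  forall t, (1 <= t <= T)%N ->
  exists K5 : R, 0 < K5 /\ exists C : R,
    forall (n : nat), (0 < n)%N ->
    forall (m z : {ffun X -> R}), inMn n m -> inDelta z ->
      `|V f pw l n T t m - Vhat f pw l T t z|
        <= K5 * supnorm (m - z) + C / Num.sqrt (n%:R).
Proof.
move=> Hp _ HL t ht; exact: (@final R X U W f pw l K1 K2 T Hp HL t ht).
Qed.
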